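(* For all $u\in C_c^\infty(0,\infty)$, $$\int_0^\infty\frac{u'(r)^2}{\sinh^2r}dr\ge\frac94\int_0^\infty\frac{u(r)^2}{\sinh^4r}dr+\int_0^\infty\frac{u(r)^2}{\sinh^2r}dr.$$ *)

(* Defs.v *)
From Stdlib Require Import Reals.
From Coquelicot Require Import Coquelicot.
Open Scope R_scope.

(* u is C^infinity on R (we consider functions on (0,oo) extended by zero). *)
Definition smooth (u : R -> R) : Prop := forall (n : nat) (x : R), ex_derive_n u n x.

Definition compact_support_pos (u : R -> R) : Prop :=
  exists a b : R, 0 < a /\ a <= b /\ forall x, (x < a \/ b < x) -> u x = 0.

Definition integral_0_oo (f : R -> R) : R :=
  RInt_gen f (at_right 0) (Rbar_locally p_infty).

(* Main.v *)
Require Import Defs.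
From Stdlib Require Import Reals Lra.
From Coquelicot Require Import Coquelicot.
Open Scope R_scope.
Definition hh r := 3/2 * cosh r / sinh r ^ 3 - / (2 * sinh r ^ 2).
Definition hd r := 3/2 * (sinh r ^ 2 - 3 * cosh r ^ 2) / sinh r ^ 4 + cosh r / sinh r^3.
Lemma sinh_pos r : 0 < r -> 0 < sinh r.
Proof. intros; rewrite <- sinh_0; now apply sinh_lt. Qed.
Lemma ch2 r : cosh r ^ 2 = 1 + sinh r ^ 2.
Proof. unfold cosh, sinh. assert (exp r * exp (-r) = 1) by (rewrite <- exp_plus; replace (r + - r) with 0 by ring; apply exp_0). nra. Qed.
Lemma sh_le_ch r : sinh r <= cosh r.
Proof. unfold cosh, sinh. pose proof (exp_pos (-r)). lra. Qed.
Lemma dF (u : R -> R) r : 0 < r -> ex_derive u r ->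
  is_derive (fun r => hh r * u r ^ 2) r (hd r * u r ^2 + hh r * (2 * u r * Derive u r)).
Proof.
  intros Hr Hu. pose proof (sinh_pos r Hr). unfold hh, hd.
  assert (exp r - exp (- r) <> 0) by (unfold sinh in H; lra).
  auto_derive.
  repeat split; try exact Hu; repeat apply Rmult_integral_contrapositive_currified; try lra.
  rewrite Derive_ext with (f:=fun x => u x) (g:=u) by reflexivity.
  field. lra.
Qed.
Lemma key s C p q : 0 < s -> s <= C -> C^2 = 1 + s^2 ->
  0 <= q^2/s^2 - 9/4*(p^2/s^4) - p^2/s^2
     - ((3/2 * (s ^ 2 - 3 * C ^ 2) / s ^ 4 + C / s^3) * p^2 + (3/2 * C / s ^ 3 - / (2 * s ^ 2)) * (2 * p * q)).
Proof.
  intros Hs HC H2.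
  replace (q^2/s^2 - 9/4*(p^2/s^4) - p^2/s^2
     - ((3/2 * (s ^ 2 - 3 * C ^ 2) / s ^ 4 + C / s^3) * p^2 + (3/2 * C / s ^ 3 - / (2 * s ^ 2)) * (2 * p * q)))
   with (((s*q - (3/2*C - s/2)*p)^2 + s*(C-s)/2*p^2 + 9/4*p^2*(C^2 - 1 - s^2)) / s^4) by (field; lra).
  rewrite H2. apply Rmult_le_pos.
  - assert (0 <= s*(C-s)/2*p^2) by (apply Rmult_le_pos; [nra| nra]).
    replace (9/4*p^2*(1 + s^2 - 1 - s^2)) with 0 by ring. pose proof (pow2_ge_0 (s*q - (3/2*C - s/2)*p)). lra.
  - apply Rlt_le, Rinv_0_lt_compat, pow_lt; lra.
Qed.
Lemma int_supp f a b : 0 < a -> a <= b -> (forall x, x < a \/ b < x -> f x = 0) ->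
  ex_RInt f a b -> integral_0_oo f = RInt f a b.
Proof.
  intros Ha Hab Hz Hex. unfold integral_0_oo. apply is_RInt_gen_unique.
  intros P HP. unfold filtermapi.
  apply Filter_prod with (fun x => 0 < x < a) (fun y => b < y).
  - exists (mkposreal a Ha). intros y Hy Hy0. split; auto.
    unfold ball in Hy; simpl in Hy. unfold AbsRing_ball, abs, minus, plus, opp in Hy; simpl in Hy.
    apply Rabs_lt_between' in Hy. lra.
  - exists b. auto.
  - intros x y Hx Hy. exists (RInt f a b). split; [|apply locally_singleton; exact HP].
    cbn [fst snd].
    assert (Z : forall c d, (forall t, Rmin c d < t < Rmax c d -> t < a \/ b < t) -> @is_RInt R_CompleteNormedModule f c d zero).
    { intros c d Hcd. apply is_RInt_ext with (fun _ => 0).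
      - intros t Ht. symmetry. apply Hz, Hcd, Ht.
      - cut (@is_RInt R_NormedModule (fun _ : R => 0) c d (scal (d - c) 0)); [ intro K; unfold scal in K; simpl in K; unfold mult in K; simpl in K; rewrite Rmult_0_r in K; exact K | exact (is_RInt_const (V:=R_NormedModule) c d 0) ]. }
    replace (RInt f a b) with (plus zero (plus (RInt f a b) zero)) by (rewrite plus_zero_l, plus_zero_r; reflexivity).
    apply (@is_RInt_Chasles R_CompleteNormedModule f x a y zero (plus (RInt f a b) zero)).
    + apply Z. intros t Ht. rewrite Rmin_left, Rmax_right in Ht by lra. lra.
    + apply (@is_RInt_Chasles R_CompleteNormedModule f a b y (RInt f a b) zero).
      * apply RInt_correct, Hex.
      * apply Z. intros t Ht. rewrite Rmin_left, Rmax_right in Ht by lra. lra.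
Qed.

Ltac ball_tac H := unfold ball in H; simpl in H; unfold AbsRing_ball, abs, minus, plus, opp in H; simpl in H; apply Rabs_lt_between' in H.

Theorem lemma6p1 (u : R -> R) :
  smooth u -> compact_support_pos u ->
  integral_0_oo (fun r => (Derive u r) ^ 2 / (sinh r) ^ 2) >=
    9 / 4 * integral_0_oo (fun r => (u r) ^ 2 / (sinh r) ^ 4)
    + integral_0_oo (fun r => (u r) ^ 2 / (sinh r) ^ 2).
Proof.
  intros Hs [a [b [Ha [Hab Hz]]]].
  assert (Hd1 : forall x, ex_derive u x) by (intro x; exact (Hs 1%nat x)).
  assert (Hd2 : forall x, ex_derive (Derive u) x) by (intro x; exact (Hs 2%nat x)).
  assert (HD0 : forall x, x < a \/ b < x -> Derive u x = 0).
  { intros x Hx. apply is_derive_unique. apply is_derive_ext_loc with (fun _ => 0).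
    - destruct Hx as [Hx|Hx].
      + assert (He : 0 < a - x) by lra. exists (mkposreal _ He). intros t Ht. ball_tac Ht. simpl in Ht.
        symmetry; apply Hz; left; lra.
      + assert (He : 0 < x - b) by lra. exists (mkposreal _ He). intros t Ht. ball_tac Ht. simpl in Ht.
        symmetry; apply Hz; right; lra.
    - apply is_derive_Reals, derivable_pt_lim_const. }
  set (a1 := a / 2). set (b1 := b + 1).
  assert (Ha1 : 0 < a1) by (unfold a1; lra).
  assert (Hab1 : a1 <= b1) by (unfold a1, b1; lra).
  assert (Hpos : forall z, Rmin a1 b1 <= z <= Rmax a1 b1 -> 0 < z).
  { intros z Hz'. rewrite Rmin_left in Hz' by lra. lra. }
  assert (CA : forall x, 0 < x -> continuous (fun r => Derive u r ^ 2 / sinh r ^ 2) x).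
  { intros x Hx. apply (ex_derive_continuous (K:=R_AbsRing) (V:=R_NormedModule)). pose proof (sinh_pos x Hx).
    assert (exp x - exp (-x) <> 0) by (unfold sinh in H; lra).
    auto_derive. repeat split; try apply Hd2; try apply Hd1; repeat apply Rmult_integral_contrapositive_currified; lra. }
  assert (CB : forall x, 0 < x -> continuous (fun r => u r ^ 2 / sinh r ^ 4) x).
  { intros x Hx. apply (ex_derive_continuous (K:=R_AbsRing) (V:=R_NormedModule)). pose proof (sinh_pos x Hx).
    assert (exp x - exp (-x) <> 0) by (unfold sinh in H; lra).
    auto_derive. repeat split; try apply Hd2; try apply Hd1; repeat apply Rmult_integral_contrapositive_currified; lra. }
  assert (CC : forall x, 0 < x -> continuous (fun r => u r ^ 2 / sinh r ^ 2) x).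
  { intros x Hx. apply (ex_derive_continuous (K:=R_AbsRing) (V:=R_NormedModule)). pose proof (sinh_pos x Hx).
    assert (exp x - exp (-x) <> 0) by (unfold sinh in H; lra).
    auto_derive. repeat split; try apply Hd2; try apply Hd1; repeat apply Rmult_integral_contrapositive_currified; lra. }
  assert (CF : forall x, 0 < x -> continuous (fun r => hd r * u r ^2 + hh r * (2 * u r * Derive u r)) x).
  { intros x Hx. apply (ex_derive_continuous (K:=R_AbsRing) (V:=R_NormedModule)). pose proof (sinh_pos x Hx). unfold hh, hd.
    assert (exp x - exp (-x) <> 0) by (unfold sinh in H; lra).
    auto_derive. repeat split; try apply Hd2; try apply Hd1; repeat apply Rmult_integral_contrapositive_currified; lra. }
  assert (EA : ex_RInt (fun r => Derive u r ^ 2 / sinh r ^ 2) a1 b1)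
    by (apply (ex_RInt_continuous (V:=R_CompleteNormedModule)); intros z Hz'; apply CA, Hpos, Hz').
  assert (EB : ex_RInt (fun r => u r ^ 2 / sinh r ^ 4) a1 b1)
    by (apply (ex_RInt_continuous (V:=R_CompleteNormedModule)); intros z Hz'; apply CB, Hpos, Hz').
  assert (EC : ex_RInt (fun r => u r ^ 2 / sinh r ^ 2) a1 b1)
    by (apply (ex_RInt_continuous (V:=R_CompleteNormedModule)); intros z Hz'; apply CC, Hpos, Hz').
  assert (Out : forall x, x < a1 \/ b1 < x -> x < a \/ b < x) by (intros x [Hx|Hx]; unfold a1, b1 in Hx; lra).
  rewrite (int_supp (fun r => Derive u r ^ 2 / sinh r ^ 2) a1 b1 Ha1 Hab1);
    [| intros x Hx; rewrite HD0 by (apply Out, Hx); unfold Rdiv; ring | exact EA].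
  rewrite (int_supp (fun r => u r ^ 2 / sinh r ^ 4) a1 b1 Ha1 Hab1);
    [| intros x Hx; rewrite Hz by (apply Out, Hx); unfold Rdiv; ring | exact EB].
  rewrite (int_supp (fun r => u r ^ 2 / sinh r ^ 2) a1 b1 Ha1 Hab1);
    [| intros x Hx; rewrite Hz by (apply Out, Hx); unfold Rdiv; ring | exact EC].
  pose (F := fun r => hh r * u r ^ 2).
  pose (dFf := fun r => hd r * u r ^2 + hh r * (2 * u r * Derive u r)).
  assert (IF : @is_RInt R_CompleteNormedModule dFf a1 b1 (minus (F b1) (F a1))).
  { apply (is_RInt_derive (V:=R_CompleteNormedModule)).
    - intros x Hx. apply dF; [apply Hpos, Hx| apply Hd1].
    - intros x Hx; apply CF, Hpos, Hx. }
  assert (F0 : F a1 = 0 /\ F b1 = 0) by (unfold F; rewrite !Hz by (unfold a1, b1; lra); split; ring).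
  pose proof (RInt_correct _ _ _ EA) as IA.
  pose proof (RInt_correct _ _ _ EB) as IB.
  pose proof (RInt_correct _ _ _ EC) as IC.
  pose proof (is_RInt_minus _ _ _ _ _ _ (is_RInt_minus _ _ _ _ _ _ (is_RInt_minus _ _ _ _ _ _ IA (is_RInt_scal _ _ _ (9/4) _ IB)) IC) IF) as I.
  assert (I0 : @is_RInt R_CompleteNormedModule (fun _ => 0) a1 b1 0).
  { cut (@is_RInt R_CompleteNormedModule (fun _ : R => 0) a1 b1 (scal (b1 - a1) 0)); [ intro K; unfold scal in K; simpl in K; unfold mult in K; simpl in K; rewrite Rmult_0_r in K; exact K | exact (is_RInt_const (V:=R_CompleteNormedModule) a1 b1 0) ]. }
  pose proof (is_RInt_le _ _ a1 b1 _ _ Hab1 I0 I) as Hle.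
  assert (Hpt : forall x, a1 < x < b1 -> 0 <= minus (minus (minus (Derive u x ^ 2 / sinh x ^ 2) (scal (9/4) (u x ^ 2 / sinh x ^ 4))) (u x ^ 2 / sinh x ^ 2)) (dFf x)).
  { intros x Hx. assert (Hx0 : 0 < x) by lra.
    pose proof (key (sinh x) (cosh x) (u x) (Derive u x) (sinh_pos x Hx0) (sh_le_ch x) (ch2 x)) as K.
    unfold minus, plus, opp, scal; simpl; unfold mult; simpl. unfold dFf, hd, hh. simpl in K |- *. lra. }
  specialize (Hle Hpt). destruct F0 as [F1 F2].
  unfold minus, plus, opp, scal in Hle; simpl in Hle; unfold mult in Hle; simpl in Hle.
  rewrite F1, F2 in Hle. simpl. lra.
Qed.
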